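(* Let $\Gamma$ be a totally ordered abelian group and let $D=\bigoplus_{s\in\Gamma_{\ge 0}}D_s$ be a domain graded by the nonnegative part of $\Gamma$ with $D_0=K$ a field, and assume $K$ is algebraically closed in $\operatorname{Frac} D$. Let $R=R(D)$ and let $\overline R$ be the integral closure of $R$ in its fraction field. Let $f,g\in D$ with $\deg(f)=\deg(g)=\delta\in\Gamma_{\ge0}$, and suppose $\frac fg\in\overline R$. Then $f_h=u\,g_h$ for some $u\in K$.
   Context: For an integral domain $D$ with fraction field $F$, the reciprocal complement $R(D)$ is the subring of $F$ generated by all $1/d$, $d\in D\setminus\{0\}$. For nonzero $f\in D$, $\deg(f)$ is the largest $s\in\Gamma_{\ge 0}$ such that the homogeneous component of $f$ in $D_s$ is nonzero, and $f_h$ denotes this homogeneous component of largest degree; $\deg(0)=-\infty$. *)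

(* Defs.v *)
From HB Require Import structures.
From mathcomp Require Import all_boot all_order all_algebra.
Set Implicit Arguments. Unset Strict Implicit. Unset Printing Implicit Defensive.
Import GRing.Theory.
Local Open Scope ring_scope.

Definition tot_ord_group (G : zmodType) (le : rel G) : Prop :=
  [/\ (forall a, le a a),
      (forall a b, le a b -> le b a -> a = b),
      (forall a b c, le a b -> le b c -> le a c),
      (forall a b, le a b || le b a)
    & (forall a b c, le a b -> le (a + c) (b + c))].

Definition lt_of (G : zmodType) (le : rel G) (a b : G) : bool :=
  (a != b) && le a b.

(* [comp s x] is the homogeneous component of x in D_s. *)
Definition graded_by (G : zmodType) (le : rel G) (D : idomainType)
  (comp : G -> D -> D) : Prop :=
  [/\ (forall s x y, comp s (x + y) = comp s x + comp s y)
    /\ (forall s x, ~~ le 0 s -> comp s x = 0),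
      (forall s t x, comp t (comp s x) = if t == s then comp s x else 0),
      (forall x, exists S : seq G,
          [/\ uniq S, x = (\sum_(s <- S) comp s x)
            & (forall s, s \notin S -> comp s x = 0)]),
      (forall s t x y, comp (s + t) (comp s x * comp t y) = comp s x * comp t y)
    & comp 0 1 = 1].

Definition inK (G : zmodType) (D : idomainType) (comp : G -> D -> D) (x : D) :=
  comp 0 x = x.

Definition deg0_field (G : zmodType) (D : idomainType) (comp : G -> D -> D) :=
  forall x, inK comp x -> x != 0 -> exists y, inK comp y /\ x * y = 1.

Definition K_alg_closed_in_frac (G : zmodType) (D : idomainType)
  (comp : G -> D -> D) : Prop :=
  forall x : {fraction D},
    (exists p : {poly D}, [/\ p != 0, (forall i, inK comp p`_i)
                             & root (map_poly (@FracField.tofrac D) p) x]) ->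
    exists k, inK comp k /\ x = FracField.tofrac k.

Inductive inRD (D : idomainType) : {fraction D} -> Prop :=
  | inRD_inv d : d != 0 -> inRD (FracField.tofrac d)^-1
  | inRD_1 : inRD 1
  | inRD_opp x : inRD x -> inRD (- x)
  | inRD_add x y : inRD x -> inRD y -> inRD (x + y)
  | inRD_mul x y : inRD x -> inRD y -> inRD (x * y).

Definition in_frac_RD (D : idomainType) (x : {fraction D}) : Prop :=
  exists a b, [/\ inRD a, inRD b, b != 0 & x = a / b].

Definition in_int_closure_RD (D : idomainType) (x : {fraction D}) : Prop :=
  in_frac_RD x /\
  exists p : {poly {fraction D}},
    [/\ p \is monic, (forall i, inRD p`_i) & root p x].

(* deg f = delta (in particular f != 0); the top component f_h is comp delta f *)
Definition has_deg (G : zmodType) (le : rel G) (D : idomainType)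
  (comp : G -> D -> D) (f : D) (delta : G) : Prop :=
  le 0 delta /\ comp delta f != 0 /\
  forall s, lt_of le delta s -> comp s f = 0.

(* Main.v *)
Require Import Defs.
From mathcomp Require Import all_boot all_order all_algebra.
From mathcomp Require Import ring.
From Stdlib Require Import ClassicalEpsilon.
Import GRing.Theory.
Local Open Scope ring_scope.

Lemma ringD_id (F : comRingType) (k l B B' : F) :
  k * B * B' + l * B' * B = (k + l) * (B * B').
Proof. ring. Qed.
Lemma ringM_id (F : comRingType) (k l B B' : F) :
  k * B * (l * B') = k * l * (B * B').
Proof. ring. Qed.

Section Grad.
Variables (G : zmodType) (le : rel G) (D : idomainType) (comp : G -> D -> D).
Hypothesis hG : tot_ord_group le.
Hypothesis hD : graded_by le comp.

Lemma le_refl' a : le a a. Proof. by case: hG => h _ _ _ _; apply: h. Qed.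
Lemma le_anti {a b} : le a b -> le b a -> a = b. Proof. by case: hG => _ h _ _ _; apply: h. Qed.
Lemma le_trans' {a b c} : le a b -> le b c -> le a c. Proof. by case: hG => _ _ h _ _; apply: h. Qed.
Lemma le_tot a b : le a b || le b a. Proof. by case: hG => _ _ _ h _; apply: h. Qed.
Lemma le_addr {a b} c : le a b -> le (a + c) (b + c). Proof. by case: hG => _ _ _ _ h; apply: h. Qed.
Lemma le_addl {a b} c : le a b -> le (c + a) (c + b).
Proof. by rewrite ![c + _]addrC; apply: le_addr. Qed.

Lemma le_add2 s a t b : le s a -> le t b -> le (s + t) (a + b).
Proof. move=> h1 h2; apply: (le_trans' (le_addr t h1)); exact: le_addl. Qed.

Lemma add_eq s a t b : le s a -> le t b -> (s + t == a + b) = (s == a) && (t == b).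
Proof.
move=> h1 h2; apply/eqP/andP => [E|[/eqP-> /eqP->] //]; split; apply/eqP.
- apply: (@addIr _ t); apply: le_anti; first exact: le_addr.
  by rewrite E; apply: le_addl.
- apply: (@addrI _ s); apply: le_anti; first exact: le_addl.
  by rewrite E; apply: le_addr.
Qed.

Lemma compD s x y : comp s (x + y) = comp s x + comp s y.
Proof. by case: hD => [[h _] _ _ _ _]; apply: h. Qed.
Lemma comp_neg s x : ~~ le 0 s -> comp s x = 0.
Proof. by case: hD => [[_ h] _ _ _ _]; apply: h. Qed.
Lemma compK s t x : comp t (comp s x) = if t == s then comp s x else 0.
Proof. by case: hD => [_ h _ _ _]; apply: h. Qed.
Lemma comp_dec x : exists S : seq G,
   [/\ uniq S, x = (\sum_(s <- S) comp s x) & (forall s, s \notin S -> comp s x = 0)].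
Proof. by case: hD => [_ _ h _ _]; apply: h. Qed.
Lemma compM s t x y : comp (s + t) (comp s x * comp t y) = comp s x * comp t y.
Proof. by case: hD => [_ _ _ h _]; apply: h. Qed.
Lemma comp01 : comp 0 1 = 1. Proof. by case: hD => [_ _ _ _ h]. Qed.

Lemma comp0 s : comp s 0 = 0.
Proof. by apply: (@addrI _ (comp s 0)); rewrite -compD !addr0. Qed.
Lemma compN s x : comp s (- x) = - comp s x.
Proof. by apply: (@addrI _ (comp s x)); rewrite -compD !subrr comp0. Qed.
Lemma comp_sum s I (r : seq I) (P : pred I) F :
  comp s (\sum_(i <- r | P i) F i) = \sum_(i <- r | P i) comp s (F i).
Proof. by apply: (big_morph (comp s)); [exact: compD| exact: comp0]. Qed.

Definition top (x : D) (a : G) := forall s, lt_of le a s -> comp s x = 0.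

Lemma nz_le x a s : top x a -> comp s x != 0 -> le s a.
Proof.
move=> h nz; case/orP: (le_tot s a) => // las.
have [E|NE] := eqVneq a s; first by rewrite E le_refl'.
by move: nz; rewrite h ?eqxx // /lt_of NE las.
Qed.

Lemma sum_pick (S : seq G) (F : G -> D) a :
  uniq S -> (forall s, s \notin S -> F s = 0) ->
  \sum_(s <- S) (if s == a then F s else 0) = F a.
Proof.
move=> uS hS; rewrite -big_mkcond /=.
have [aS|naS] := boolP (a \in S).
  by rewrite -big_filter filter_pred1_uniq // big_seq1.
rewrite big1_seq ?hS // => s /andP [/eqP-> ]; by rewrite (negbTE naS).
Qed.

Lemma mul_top x y a b : top x a -> top y b ->
  top (x * y) (a + b) /\ comp (a + b) (x * y) = comp a x * comp b y.
Proof.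
move=> hx hy.
have [S [uS eS nS]] := comp_dec x.
have [T [uT eT nT]] := comp_dec y.
have key u : comp u (x * y) = \sum_(s <- S) \sum_(t <- T)
    (if u == s + t then comp s x * comp t y else 0).
  rewrite {1}eS {1}eT big_distrl comp_sum; apply: eq_bigr => s _.
  rewrite big_distrr comp_sum; apply: eq_bigr => t _.
  by rewrite /= -{1}compM compK compM.
have nzc s t : comp s x * comp t y != 0 -> le s a /\ le t b.
  by rewrite mulf_eq0 negb_or => /andP [h1 h2]; split; [apply: nz_le h1|apply: nz_le h2].
split.
  move=> u /andP [ne lu]; rewrite key big1 // => s _; rewrite big1 // => t _.
  case: eqP => // Eu; apply/eqP; apply: contraNT ne => /nzc [h1 h2].
  apply/eqP; apply: le_anti => //; rewrite Eu; exact: le_add2.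
rewrite key.
transitivity (\sum_(s <- S) (if s == a then
   \sum_(t <- T) (if t == b then comp s x * comp t y else 0) else 0)).
  apply: eq_bigr => s _.
  have [z|nz] := eqVneq (comp s x) 0.
    rewrite z big1 => [|t _]; last by rewrite mul0r if_same.
    by case: ifP => // _; rewrite big1 // => t _; rewrite mul0r if_same.
  case: ifP => sa.
    apply: eq_bigr => t _.
    have [z|nzt] := eqVneq (comp t y) 0; first by rewrite z mulr0 !if_same.
    have [h1 h2] := nzc s t (mulf_neq0 nz nzt).
    by rewrite eq_sym add_eq // (eqP sa) eqxx.
  rewrite big1 // => t _.
  have [z|nzt] := eqVneq (comp t y) 0; first by rewrite z mulr0 !if_same.
  have [h1 h2] := nzc s t (mulf_neq0 nz nzt).
  by rewrite eq_sym add_eq // sa.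
rewrite (@sum_pick S (fun s => \sum_(t <- T) (if t == b then comp s x * comp t y else 0))) //.
  by rewrite (@sum_pick T (fun t => comp a x * comp t y)) // => t /nT ->; rewrite mulr0.
move=> s /nS ->; by rewrite big1 // => t _; rewrite mul0r if_same.
Qed.


Hypothesis hK : deg0_field comp.
Local Notation tf := (@FracField.tofrac D).

Lemma tf_inj : injective tf.
Proof. by move=> x y /eqP; rewrite tofrac_eq => /eqP. Qed.

Definition Q (x k : {fraction D}) := exists a b beta,
  [/\ comp beta b != 0, top b beta, top a beta, x = tf a / tf b
    & tf (comp beta a) = k * tf (comp beta b)].

Lemma nz_of {b beta} : comp beta b != 0 -> b != 0.
Proof. by apply: contraNneq => ->; rewrite comp0. Qed.

Lemma tfnz {b} : b != 0 -> tf b != 0.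
Proof. by rewrite tofrac_eq0. Qed.

Lemma top1 : top 1 0.
Proof.
move=> s /andP [ne _]; rewrite -comp01 compK.
by rewrite eq_sym (negbTE ne).
Qed.

Lemma comp1nz : comp 0 1 != 0 :> D.
Proof. by rewrite comp01 oner_eq0. Qed.

Lemma Q0 : Q 0 0.
Proof.
exists 0, 1, 0; split => //; first exact: comp1nz; first exact: top1.
- by move=> s _; rewrite comp0.
- by rewrite rmorph0 mul0r.
- by rewrite comp0 rmorph0 mul0r.
Qed.

Lemma Q1 : Q 1 1.
Proof.
exists 1, 1, 0; split => //; first exact: comp1nz; try exact: top1.
- by rewrite rmorph1 divr1.
- by rewrite mul1r.
Qed.

Lemma QN x k : Q x k -> Q (- x) (- k).
Proof.
case=> a [b [be [nz tb ta ex ek]]]; exists (- a), b, be; split => //.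
- by move=> s /ta; rewrite compN => ->; rewrite oppr0.
- by rewrite ex rmorphN mulNr.
- by rewrite compN rmorphN /= ek mulNr.
Qed.

Lemma QD x k y l : Q x k -> Q y l -> Q (x + y) (k + l).
Proof.
case=> a [b [be [nz tb ta ex ek]]]; case=> a' [b' [be' [nz' tb' ta' ey el]]].
have [tbb ebb] := @mul_top _ _ _ _ tb tb'.
have [tab eab] := @mul_top _ _ _ _ ta tb'.
have [tab' eab'] := @mul_top _ _ _ _ ta' tb.
rewrite [be' + be]addrC in tab' eab'.
exists (a * b' + a' * b), (b * b'), (be + be'); split.
- by rewrite ebb mulf_neq0.
- exact: tbb.
- by move=> s hs; rewrite compD tab // tab' // addr0.
- have h1 := tfnz (nz_of nz); have h2 := tfnz (nz_of nz').
  by rewrite ex ey addf_div // !(rmorphD, rmorphM).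
- by rewrite compD eab eab' ebb !(rmorphD, rmorphM) /= ek el ringD_id.
Qed.

Lemma QM x k y l : Q x k -> Q y l -> Q (x * y) (k * l).
Proof.
case=> a [b [be [nz tb ta ex ek]]]; case=> a' [b' [be' [nz' tb' ta' ey el]]].
have [tbb ebb] := @mul_top _ _ _ _ tb tb'.
have [taa eaa] := @mul_top _ _ _ _ ta ta'.
exists (a * a'), (b * b'), (be + be'); split.
- by rewrite ebb mulf_neq0.
- exact: tbb.
- exact: taa.
- have h1 := tfnz (nz_of nz); have h2 := tfnz (nz_of nz').
  by rewrite ex ey mulf_div !rmorphM.
- by rewrite eaa ebb !rmorphM /= ek el ringM_id.
Qed.

Lemma QX x k n : Q x k -> Q (x ^+ n) (k ^+ n).
Proof.
move=> h; elim: n => [|n IH]; first by rewrite !expr0; exact: Q1.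
by rewrite !exprS; apply: QM.
Qed.

Lemma Q0_inv k : Q 0 k -> k = 0.
Proof.
case=> a [b [be [nz tb ta ex ek]]].
have h1 := tfnz (nz_of nz).
have a0 : a = 0.
  apply: tf_inj; rewrite rmorph0; apply/eqP; move/eqP: ex; rewrite eq_sym.
  by rewrite mulf_eq0 invr_eq0 (negbTE h1) orbF.
move: ek; rewrite a0 comp0 rmorph0 => /esym/eqP; rewrite mulf_eq0.
by rewrite (negbTE (tfnz nz)) orbF => /eqP.
Qed.

Lemma Q_uniq x k l : Q x k -> Q x l -> k = l.
Proof.
move=> hk hl; apply/eqP; rewrite -subr_eq0; apply/eqP; apply: Q0_inv.
by rewrite -(subrr x); apply: QD => //; apply: QN.
Qed.


Lemma seq_max (P : pred G) (S : seq G) : has P S ->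
  exists2 b, b \in S & P b /\ (forall s, s \in S -> P s -> le s b).
Proof.
elim: S => [//|s0 S IH] /=.
have [hS|nhS] := boolP (has P S).
  have [b bS [Pb hb]] := IH hS => _.
  have [P0|nP0] := boolP (P s0); last first.
    exists b; first by rewrite in_cons bS orbT.
    split => // s; rewrite in_cons => /orP [/eqP-> |sS Ps]; first by rewrite (negbTE nP0).
    exact: hb.
  have [lb|nlb] := boolP (le b s0).
    exists s0; first by rewrite in_cons eqxx.
    split => // s; rewrite in_cons => /orP [/eqP-> _|sS Ps]; first exact: le_refl'.
    exact: le_trans' (hb s sS Ps) lb.
  exists b; first by rewrite in_cons bS orbT.
  split => // s; rewrite in_cons => /orP [/eqP-> _|sS Ps]; last exact: hb.
  by move: (le_tot b s0); rewrite (negbTE nlb).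
rewrite orbF => P0 ; exists s0; first by rewrite in_cons eqxx.
split => // s; rewrite in_cons => /orP [/eqP-> _|sS Ps]; first exact: le_refl'.
by move/hasPn: nhS => /(_ s sS); rewrite Ps.
Qed.

Lemma exists_top x : x != 0 -> exists beta, comp beta x != 0 /\ top x beta.
Proof.
move=> nx; have [S [uS eS nS]] := comp_dec x.
have [hS|nhS] := boolP (has (fun s => comp s x != 0) S); last first.
  have : x = 0.
    rewrite eS big1_seq // => s /andP [_ sS].
    by move/hasPn: nhS => /(_ s sS); rewrite negbK => /eqP.
  by move/eqP: nx.
have [b bS [Pb hb]] := seq_max _ _ hS.
exists b; split => // s /andP [ne lbs]; apply/eqP.
have [Ps|] := boolP (comp s x != 0); last by rewrite negbK.
have sS : s \in S by apply: contraNT Ps => /nS ->; rewrite eqxx.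
by move: ne; rewrite (le_anti lbs (hb s sS Ps)) eqxx.
Qed.

Lemma le0_of beta x : comp beta x != 0 -> le 0 beta.
Proof. by apply: contraNT => /comp_neg ->; rewrite eqxx. Qed.

Lemma QRD c : inRD c -> exists k, inK comp k /\ Q c (tf k).
Proof.
elim=> {c}.
- move=> d nd; have [be [nzb tb]] := exists_top _ nd.
  have tb1 : top 1 be.
    move=> s /andP [ne lbs]; rewrite -comp01 compK.
    case: eqP => // s0; rewrite s0 in ne lbs; case/eqP: ne.
    exact: le_anti lbs (le0_of _ _ nzb).
  have [b0|bn0] := eqVneq be 0.
    have inKc : inK comp (comp be d) by rewrite /inK b0 compK eqxx.
    have [y [iy ey]] := hK _ inKc nzb.
    exists y; split => //; exists 1, d, be; split => //.
    + by rewrite rmorph1 div1r.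
    + by rewrite b0 comp01 -rmorphM mulrC -b0 ey rmorph1.
  exists 0; split; first by rewrite /inK comp0.
  exists 1, d, be; split => //.
  + by rewrite rmorph1 div1r.
  + by rewrite -comp01 compK (negbTE bn0) !rmorph0 mul0r.
- by exists 1; split; [exact: comp01 | rewrite rmorph1; exact: Q1].
- move=> x _ [k [ik qk]]; exists (- k); split; first by rewrite /inK compN ik.
  by rewrite rmorphN; apply: QN.
- move=> x y _ [k [ik qk]] _ [l [il ql]]; exists (k + l); split.
    by rewrite /inK compD ik il.
  by rewrite rmorphD; apply: QD.
- move=> x y _ [k [ik qk]] _ [l [il ql]]; exists (k * l); split.
    by rewrite /inK -ik -il; have := compM 0 0 k l; rewrite addr0.
  by rewrite rmorphM; apply: QM.
Qed.

Hypothesis hA : K_alg_closed_in_frac comp.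

Lemma main_sec (f g : D) (delta : G) :
    has_deg le comp f delta -> has_deg le comp g delta ->
    in_int_closure_RD (FracField.tofrac f / FracField.tofrac g) ->
    exists u : D, inK comp u /\ comp delta f = u * comp delta g.
Proof.
move=> [_ [nzf tpf]] [_ [nzg tpg]] [_ [p [mon hp rt]]].
set y := tf (comp delta f) / tf (comp delta g).
have Qx : Q (tf f / tf g) y.
  exists f, g, delta; split => //; by rewrite /y divfK // tfnz.
have hk i : exists k, inK comp k /\ Q p`_i (tf k) := QRD _ (hp i).
pose kf i := proj1_sig (constructive_indefinite_description _ (hk i)).
have kfP i : inK comp (kf i) /\ Q p`_i (tf (kf i)) :=
  proj2_sig (constructive_indefinite_description _ (hk i)).
pose q := \poly_(i < size p) kf i.
have Qe : Q p.[tf f / tf g] (map_poly tf q).[y].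
  rewrite (horner_coef p) (@horner_coef_wide _ (size p) (map_poly tf q)); last first.
    rewrite size_map_inj_poly ?size_poly //; try exact: tf_inj; try exact: rmorph0.
  apply: (big_ind2 Q); [exact: Q0 | by move=> ? ? ? ? ? ?; apply: QD | move=> i _].
  rewrite coef_map coef_poly ltn_ord; apply: QM; first exact: (kfP i).2.
  exact: QX.
rewrite (eqP rt) in Qe; have r0 := Q0_inv _ Qe.
have qnz : q != 0.
  have sp : (0 < size p)%N by rewrite size_poly_gt0 monic_neq0.
  apply/eqP => q0; move: (kfP (size p).-1).
  have -> : p`_(size p).-1 = 1 by move/monicP: mon; rewrite /lead_coef.
  move=> [_ h]; have := Q_uniq _ _ _ h Q1.
  have : q`_(size p).-1 = kf (size p).-1 by rewrite coef_poly prednK // leqnn.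
  by rewrite q0 coef0 => <-; rewrite rmorph0 => /eqP; rewrite eq_sym oner_eq0.
have [u [iu eu]] : exists k, inK comp k /\ y = tf k.
  apply: hA; exists q; split => //; last by apply/rootP.
  move=> i; rewrite coef_poly; case: ifP => _; first exact: (kfP i).1.
  by rewrite /inK comp0.
exists u; split => //; apply: tf_inj; rewrite rmorphM /= -eu /y divfK //.
exact: tfnz.
Qed.

End Grad.

Theorem mainTheorem9 (G : zmodType) (le : rel G) (D : idomainType)
  (comp : G -> D -> D) :
  tot_ord_group le ->
  graded_by le comp ->
  deg0_field comp ->
  K_alg_closed_in_frac comp ->
  forall (f g : D) (delta : G),
    has_deg le comp f delta -> has_deg le comp g delta ->
    in_int_closure_RD (FracField.tofrac f / FracField.tofrac g) ->
    exists u : D, inK comp u /\ comp delta f = u * comp delta g.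
Proof. move=> hG hD hK hA f g delta; exact: main_sec. Qed.
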